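(* For every real $D>1$ there exist $\alpha,\beta\in(0,\infty]$ with $\alpha\ne\beta$, and finite order SISO deterministic programs $C_1$ and $C_2$ with uniformly distributed secret input, such that $$\lim_{N\to\infty}\frac{IL_\alpha(C_1,N)}{IL_\alpha(C_2,N)}>D\quad\text{and}\quad\lim_{N\to\infty}\frac{IL_\beta(C_1,N)}{IL_\beta(C_2,N)}<\frac1D.$$ In particular, both limits exist.
   Context: A SISO deterministic program $C$ is a family indexed by $N\in\mathbb{N}^+$: for each $N$, a random variable $A$ uniformly distributed on $\mathcal{A}_N=\{0,1,\dots,N-1\}$, and a surjective map $F_N$ from $\mathcal{A}_N$ onto a finite set $\mathcal{O}_N$. The output is $O=F_N(A)$, and $\mathbf{p}_N$ denotes its distribution vector, so $\mathbf{p}_N(o)=|F_N^{-1}(o)|/N$. $C$ is of finite order if $\sup_N\|\mathbf{p}_N\|_0<\infty$, where $\|\mathbf{p}\|_0$ is the number of nonzero entries of $\mathbf{p}$. For a probability vector $\mathbf{p}$ and $\alpha\in(0,\infty]$, the Rényi entropy is $H_\alpha(\mathbf{p})=\frac{1}{1-\alpha}\log\sum_i p_i^\alpha$ for $\alpha\notin\{1,\infty\}$. The limiting cases are $H_1(\mathbf{p})=-\sum_i p_i\log p_i$ and $H_\infty(\mathbf{p})=-\log\max_i p_i$. The $\alpha$-information leakage is $IL_\alpha(C,N)=H_\alpha(\mathbf{p}_N)$. Both programs are evaluated at the same $N$. *)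

(* Defs.v *)
From Stdlib Require Import Reals List Arith.
From Coquelicot Require Import Coquelicot.
Import ListNotations.
Open Scope R_scope.

(* A SISO deterministic program: for each N, the map F_N : {0,..,N-1} -> outputs.
   Outputs are encoded as natural numbers; the output set O_N is taken to be the
   image of F_N on {0,..,N-1}, so F_N is surjective onto O_N by construction.
   Values of [F N a] for a >= N, and the index N = 0, are irrelevant. *)
Definition program := nat -> nat -> nat.

Definition outputs (F : program) (N : nat) : list nat :=
  nodup Nat.eq_dec (map (F N) (seq 0 N)).

Definition preimage_card (F : program) (N o : nat) : nat :=
  length (filter (fun a => Nat.eqb (F N a) o) (seq 0 N)).

Definition distr (F : program) (N : nat) : list R :=
  map (fun o => INR (preimage_card F N o) / INR N) (outputs F N).

Definition finite_order (F : program) : Prop :=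
  exists K : nat, forall N : nat, (1 <= N)%nat -> (length (filter (fun x => if Req_EM_T x 0 then false else true) (distr F N)) <= K)%nat.

Definition renyi (alpha : Rbar) (ps : list R) : R :=
  match alpha with
  | p_infty => - ln (fold_right Rmax 0 ps)
  | Finite a =>
      if Req_EM_T a 1 then - fold_right Rplus 0 (map (fun p => p * ln p) ps)
      else / (1 - a) * ln (fold_right Rplus 0 (map (fun p => Rpower p a) ps))
  | m_infty => 0 (* excluded: alpha must lie in (0, +oo] *)
  end.

Definition IL (alpha : Rbar) (F : program) (N : nat) : R := renyi alpha (distr F N).

Definition valid_order (alpha : Rbar) : Prop := Rbar_lt (Finite 0) alpha.

(* Main.v *)
Require Import Defs.
From Stdlib Require Import Reals List Arith Lia Lra Permutation.
From Coquelicot Require Import Coquelicot.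
Import ListNotations.
Open Scope R_scope.

Definition cntp (P : nat -> bool) (N : nat) : nat := length (filter P (seq 0 N)).

Lemma map_add_seq (Q s N : nat) : map (Nat.add Q) (seq s N) = seq (Q + s) N.
Proof.
  revert s; induction N as [|N IH]; intros s; simpl; [reflexivity|].
  rewrite IH. f_equal. f_equal. lia.
Qed.

Lemma filter_map_len (P : nat -> bool) (f : nat -> nat) l :
  length (filter P (map f l)) = length (filter (fun a => P (f a)) l).
Proof. induction l as [|x l IH]; simpl; [reflexivity|]. destruct (P (f x)); simpl; auto. Qed.

Lemma cnt_period (P : nat -> bool) (Q N : nat) :
  (forall a, P (Q + a)%nat = P a) -> cntp P (Q + N)%nat = (cntp P Q + cntp P N)%nat.
Proof.
  intros HP. unfold cntp. rewrite seq_app, filter_app, length_app. f_equal.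
  simpl. replace (seq Q N) with (seq (Q+0) N) by (f_equal; lia). rewrite <- map_add_seq. rewrite filter_map_len.
  f_equal. apply filter_ext. auto.
Qed.

Lemma cnt_decomp (P : nat -> bool) (Q k r : nat) :
  (forall a, P (Q + a)%nat = P a) -> cntp P (Q * k + r)%nat = (k * cntp P Q + cntp P r)%nat.
Proof.
  intros HP. induction k as [|k IH].
  - rewrite Nat.mul_0_r. simpl. reflexivity.
  - replace (Q * S k + r)%nat with (Q + (Q * k + r))%nat by lia.
    rewrite cnt_period by auto. rewrite IH. lia.
Qed.

Lemma cnt_le (P : nat -> bool) N : (cntp P N <= N)%nat.
Proof. unfold cntp. rewrite <- (length_seq N 0) at 2. apply filter_length_le. Qed.

Lemma cnt_bounds (P : nat -> bool) (Q N : nat) :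
  (0 < Q)%nat -> (forall a, P (Q + a)%nat = P a) ->
  (Q * cntp P N <= cntp P Q * N + Q * Q)%nat /\ (cntp P Q * N <= Q * cntp P N + Q * cntp P Q)%nat.
Proof.
  intros HQ HP.
  pose proof (Nat.div_mod N Q ltac:(lia)) as Hd.
  pose proof (Nat.mod_upper_bound N Q ltac:(lia)) as Hm.
  set (k := (N / Q)%nat) in *. set (r := (N mod Q)%nat) in *.
  rewrite Hd. rewrite cnt_decomp by auto.
  pose proof (cnt_le P r). pose proof (cnt_le P Q).
  split; nia.
Qed.

Lemma INR_div_lim : is_lim_seq (fun N => / INR N) 0.
Proof.
  replace (Finite 0) with (Rbar_inv p_infty) by reflexivity.
  apply is_lim_seq_inv. apply is_lim_seq_INR. discriminate.
Qed.

Lemma cnt_lim (P : nat -> bool) (Q : nat) :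
  (0 < Q)%nat -> (forall a, P (Q + a)%nat = P a) ->
  is_lim_seq (fun N => INR (cntp P N) / INR N) (INR (cntp P Q) / INR Q).
Proof.
  intros HQ HP.
  set (c := INR (cntp P Q)). set (q := INR Q).
  assert (Hq : 0 < q) by (apply lt_0_INR; lia).
  apply is_lim_seq_le_le_loc with (u := fun N => c / q - c * / INR N)
     (w := fun N => c / q + q * / INR N).
  - exists 1%nat. intros N HN.
    destruct (cnt_bounds P Q N HQ HP) as [H1 H2].
    apply le_INR in H1. apply le_INR in H2.
    rewrite !plus_INR, !mult_INR in H1, H2. fold c q in H1, H2.
    assert (HN' : 0 < INR N) by (apply lt_0_INR; lia).
    set (x := INR (cntp P N)) in *. set (n := INR N) in *.
    split.
    + apply Rmult_le_reg_r with (q * n); [nra|].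
      field_simplify; [|lra|lra]. nra.
    + apply Rmult_le_reg_r with (q * n); [nra|].
      field_simplify; [|lra|lra]. nra.
  - pose proof (is_lim_seq_minus' _ _ _ _ (is_lim_seq_const (c/q)) (is_lim_seq_mult' _ _ _ _ (is_lim_seq_const c) INR_div_lim)) as H.
    rewrite Rmult_0_r, Rminus_0_r in H. exact H.
  - pose proof (is_lim_seq_plus' _ _ _ _ (is_lim_seq_const (c/q)) (is_lim_seq_mult' _ _ _ _ (is_lim_seq_const q) INR_div_lim)) as H.
    rewrite Rmult_0_r, Rplus_0_r in H. exact H.
Qed.
Lemma fold_perm {A B} (f : A -> B -> B) (z : B) (l l' : list A) :
  (forall x y w, f x (f y w) = f y (f x w)) -> Permutation l l' ->
  fold_right f z l = fold_right f z l'.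
Proof.
  intros Hc HP; induction HP; simpl; try congruence.
Qed.

Lemma renyi_perm (a : Rbar) l l' : Permutation l l' -> renyi a l = renyi a l'.
Proof.
  intros HP. destruct a as [a| |]; simpl; auto.
  - destruct (Req_EM_T a 1).
    + f_equal. apply fold_perm; try (intros; ring); try (apply Permutation_map; auto).
    + f_equal. f_equal. apply fold_perm; try (intros; ring); try (apply Permutation_map; auto).
  - f_equal. f_equal. apply fold_perm; auto.
    intros x y w. rewrite !Rmax_assoc, (Rmax_comm x y). reflexivity.
Qed.

Definition prog (g : nat -> nat) (Q : nat) : program := fun _ a => g (a mod Q).

Lemma outputs_perm g Q N V :
  (0 < Q)%nat -> (Q <= N)%nat -> NoDup V ->
  (forall o, In o V <-> exists r, (r < Q)%nat /\ g r = o) ->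
  Permutation (outputs (prog g Q) N) V.
Proof.
  intros HQ HN HV Hm. apply NoDup_Permutation; [apply NoDup_nodup|auto|].
  intros o. unfold outputs. rewrite nodup_In, in_map_iff, Hm. split.
  - intros [a [Ha Hin]]. apply in_seq in Hin. exists (a mod Q)%nat. split; auto.
    apply Nat.mod_upper_bound; lia.
  - intros [r [Hr Hg]]. exists r. split.
    + unfold prog. rewrite Nat.mod_small; auto.
    + apply in_seq. lia.
Qed.

Definition P_of g Q o := fun a => Nat.eqb (g (a mod Q)%nat) o.

Lemma P_period g Q o : (0 < Q)%nat -> forall a, P_of g Q o (Q + a)%nat = P_of g Q o a.
Proof.
  intros HQ a. unfold P_of. replace (Q + a)%nat with (a + 1 * Q)%nat by lia.
  rewrite Nat.Div0.mod_add. reflexivity.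
Qed.

Lemma IL_eq alpha g Q N V :
  (0 < Q)%nat -> (Q <= N)%nat -> NoDup V ->
  (forall o, In o V <-> exists r, (r < Q)%nat /\ g r = o) ->
  IL alpha (prog g Q) N = renyi alpha (map (fun o => INR (cntp (P_of g Q o) N) / INR N) V).
Proof.
  intros. unfold IL, distr. apply renyi_perm. apply Permutation_map.
  apply outputs_perm; auto.
Qed.

Lemma lim_Rmax (u v : nat -> R) (a b : R) : is_lim_seq u a -> is_lim_seq v b ->
  is_lim_seq (fun n => Rmax (u n) (v n)) (Rmax a b).
Proof.
  intros Hu Hv.
  assert (E : forall x y, Rmax x y = (x + y + Rabs (x - y)) * / 2).
  { intros x y. unfold Rmax, Rabs. destruct (Rle_dec x y); destruct (Rcase_abs (x - y)); lra. }
  rewrite E. apply is_lim_seq_ext with (u := fun n => (u n + v n + Rabs (u n - v n)) * / 2).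
  { intros; rewrite E; auto. }
  apply is_lim_seq_mult'; [|apply is_lim_seq_const].
  apply is_lim_seq_plus'. apply is_lim_seq_plus'; auto.
  apply (is_lim_seq_abs _ (a - b)). apply is_lim_seq_minus'; auto.
Qed.

Lemma ln_cont x : 0 < x -> continuity_pt ln x.
Proof.
  intros Hx. apply derivable_continuous_pt. exists (/ x). apply derivable_pt_lim_ln; auto.
Qed.

Lemma lim_ln (u : nat -> R) (a : R) : 0 < a -> is_lim_seq u a -> is_lim_seq (fun n => ln (u n)) (ln a).
Proof. intros Ha Hu. apply is_lim_seq_continuous; auto. apply ln_cont; auto. Qed.

Lemma lim_max_list (V : list nat) (x : nat -> nat -> R) (l : nat -> R) :
  (forall o, In o V -> is_lim_seq (fun N => x N o) (l o)) ->
  is_lim_seq (fun N => fold_right Rmax 0 (map (x N) V)) (fold_right Rmax 0 (map l V)).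
Proof.
  induction V as [|o V IH]; intros H; simpl.
  - apply is_lim_seq_const.
  - apply lim_Rmax. apply H; simpl; auto. apply IH. intros; apply H; simpl; auto.
Qed.

Lemma lim_shan_list (V : list nat) (x : nat -> nat -> R) (l : nat -> R) :
  (forall o, In o V -> is_lim_seq (fun N => x N o) (l o) /\ 0 < l o) ->
  is_lim_seq (fun N => fold_right Rplus 0 (map (fun p => p * ln p) (map (x N) V)))
    (fold_right Rplus 0 (map (fun p => p * ln p) (map l V))).
Proof.
  induction V as [|o V IH]; intros H; simpl.
  - apply is_lim_seq_const.
  - apply is_lim_seq_plus'.
    + destruct (H o) as [H1 H2]; simpl; auto.
      apply is_lim_seq_mult'; auto. apply lim_ln; auto.
    + apply IH. intros; apply H; simpl; auto.
Qed.

Lemma fold_max_ge l x : In x l -> x <= fold_right Rmax 0 l.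
Proof.
  induction l as [|y l IH]; simpl; [tauto|]. intros [->|Hi].
  - apply Rmax_l.
  - eapply Rle_trans; [apply IH; auto| apply Rmax_r].
Qed.

Lemma cnt_pos g Q V o : (0 < Q)%nat ->
  (forall o, In o V <-> exists r, (r < Q)%nat /\ g r = o) -> In o V ->
  0 < INR (cntp (P_of g Q o) Q) / INR Q.
Proof.
  intros HQ Hm Ho. apply Hm in Ho. destruct Ho as [r [Hr Hg]].
  assert (Hin : In r (filter (P_of g Q o) (seq 0 Q))).
  { apply filter_In. split. apply in_seq; lia. unfold P_of. rewrite Nat.mod_small by auto.
    apply Nat.eqb_eq; auto. }
  unfold cntp. destruct (filter (P_of g Q o) (seq 0 Q)) eqn:E; [destruct Hin|].
  apply Rdiv_lt_0_compat. apply lt_0_INR; simpl; lia.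
  apply lt_0_INR; auto.
Qed.

Lemma entry_lim g Q o : (0 < Q)%nat ->
  is_lim_seq (fun N => INR (cntp (P_of g Q o) N) / INR N) (INR (cntp (P_of g Q o) Q) / INR Q).
Proof. intros HQ. apply cnt_lim; auto. apply P_period; auto. Qed.

Lemma IL_ev alpha g Q V :
  (0 < Q)%nat -> NoDup V ->
  (forall o, In o V <-> exists r, (r < Q)%nat /\ g r = o) ->
  eventually (fun N => renyi alpha (map (fun o => INR (cntp (P_of g Q o) N) / INR N) V) = IL alpha (prog g Q) N).
Proof.
  intros. exists Q. intros N HN. symmetry. apply IL_eq; auto.
Qed.

Lemma IL_lim_inf g Q V :
  (0 < Q)%nat -> NoDup V ->
  (forall o, In o V <-> exists r, (r < Q)%nat /\ g r = o) ->
  is_lim_seq (fun N => IL p_infty (prog g Q) N)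
    (renyi p_infty (map (fun o => INR (cntp (P_of g Q o) Q) / INR Q) V)).
Proof.
  intros HQ HV Hm. eapply is_lim_seq_ext_loc; [apply IL_ev; eauto|].
  simpl. apply (is_lim_seq_opp _ (ln _)). apply lim_ln.
  - assert (H0 : In (g 0%nat) V) by (apply Hm; exists 0%nat; split; auto).
    eapply Rlt_le_trans; [apply (cnt_pos g Q V (g 0%nat)); auto|].
    apply fold_max_ge. apply in_map_iff. exists (g 0%nat). split; auto.
  - apply (lim_max_list V (fun N o => INR (cntp (P_of g Q o) N) / INR N)).
    intros; apply entry_lim; auto.
Qed.

Lemma IL_lim_one g Q V :
  (0 < Q)%nat -> NoDup V ->
  (forall o, In o V <-> exists r, (r < Q)%nat /\ g r = o) ->
  is_lim_seq (fun N => IL (Finite 1) (prog g Q) N)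
    (renyi (Finite 1) (map (fun o => INR (cntp (P_of g Q o) Q) / INR Q) V)).
Proof.
  intros HQ HV Hm. eapply is_lim_seq_ext_loc; [apply IL_ev; eauto|].
  simpl. destruct (Req_EM_T 1 1) as [_|n]; [|lra].
  apply -> (is_lim_seq_opp (fun N => fold_right Rplus 0 (map (fun p => p * ln p) (map (fun o => INR (cntp (P_of g Q o) N) / INR N) V))) (Finite (fold_right Rplus 0 (map (fun p => p * ln p) (map (fun o => INR (cntp (P_of g Q o) Q) / INR Q) V))))).
  apply (lim_shan_list V (fun N o => INR (cntp (P_of g Q o) N) / INR N)).
  intros; split. apply entry_lim; auto. eapply cnt_pos; eauto.
Qed.

Lemma fo_prog g Q B : (0 < Q)%nat -> (forall r, (r < Q)%nat -> (g r <= B)%nat) ->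
  finite_order (prog g Q).
Proof.
  intros HQ Hb. exists (S B). intros N _.
  eapply Nat.le_trans; [apply filter_length_le|]. unfold distr. rewrite length_map.
  rewrite <- (length_seq (S B) 0).
  apply NoDup_incl_length. apply NoDup_nodup.
  intros o Ho. unfold outputs in Ho. rewrite nodup_In, in_map_iff in Ho.
  destruct Ho as [a [Ha _]]. apply in_seq. split; [lia|].
  rewrite <- Ha. unfold prog. pose proof (Hb (a mod Q)%nat ltac:(apply Nat.mod_upper_bound; lia)). lia.
Qed.

Lemma count_eq0 n o : length (filter (fun a => Nat.eqb a o) (seq 0 n)) = if Nat.ltb o n then 1%nat else 0%nat.
Proof.
  induction n as [|n IH]; [reflexivity|].
  rewrite seq_S, filter_app, length_app, IH. simpl.
  destruct (Nat.ltb_spec o n), (Nat.eqb_spec n o), (Nat.ltb_spec o (S n)); simpl; lia.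
Qed.

Lemma count_const (b : bool) (l : list nat) : length (filter (fun _ => b) l) = if b then length l else 0%nat.
Proof. induction l as [|x l IH]; destruct b; simpl; auto. Qed.

Lemma cnt2 T L o : (2 <= T)%nat -> (1 <= L)%nat -> (o <= L)%nat ->
  cntp (P_of (fun r => Nat.min r L) (T * L) o) (T * L) =
  if Nat.ltb o L then 1%nat else (T * L - L)%nat.
Proof.
  intros HT HL Ho. unfold cntp, P_of.
  rewrite (filter_ext_in _ (fun a => Nat.eqb (Nat.min a L) o)).
  2:{ intros a Ha. apply in_seq in Ha. rewrite Nat.mod_small by lia. reflexivity. }
  replace (T * L)%nat with (L + (T * L - L))%nat at 1 by nia.
  rewrite seq_app, filter_app, length_app.
  rewrite (filter_ext_in _ (fun a => Nat.eqb a o) (seq 0 L)).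
  2:{ intros a Ha. apply in_seq in Ha. rewrite Nat.min_l by lia. reflexivity. }
  rewrite (filter_ext_in _ (fun _ => Nat.eqb L o) (seq (0 + L) _)).
  2:{ intros a Ha. apply in_seq in Ha. rewrite Nat.min_r by lia. reflexivity. }
  rewrite count_eq0, count_const, length_seq.
  destruct (Nat.ltb_spec o L), (Nat.eqb_spec L o); lia.
Qed.

Lemma fold_max_const (c m : R) (l : list nat) : c <= m ->
  fold_right Rmax m (map (fun _ => c) l) = m.
Proof.
  intros Hc. induction l as [|x l IH]; simpl; auto. rewrite IH. apply Rmax_right; auto.
Qed.

Lemma fold_shan_const (c z : R) (l : list nat) :
  fold_right Rplus z (map (fun p => p * ln p) (map (fun _ => c) l)) = INR (length l) * (c * ln c) + z.
Proof.
  induction l as [|x l IH]; cbn [map fold_right length]; [simpl; ring|]. rewrite IH. rewrite S_INR. ring.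
Qed.

Definition C1 : program := prog (fun r => r) 2.
Definition V1 : list nat := [0%nat; 1%nat].

Lemma V1_mem : forall o, In o V1 <-> exists r, (r < 2)%nat /\ r = o.
Proof.
  intros o. simpl. split.
  - intros [H|[H|[]]]; subst; eexists; split; [|reflexivity| |reflexivity]; lia.
  - intros [r [Hr <-]]. lia.
Qed.

Lemma V1_nodup : NoDup V1.
Proof. repeat constructor; simpl; intuition lia. Qed.

Lemma C1_lim (a : Rbar) : a = p_infty \/ a = Finite 1 ->
  is_lim_seq (fun N => IL a C1 N) (ln 2).
Proof.
  intros Ha.
  assert (E : map (fun o => INR (cntp (P_of (fun r => r) 2 o) 2) / INR 2) V1 = [/2; /2]).
  { simpl. replace (cntp (P_of (fun r => r) 2 0) 2) with 1%nat by reflexivity.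
    replace (cntp (P_of (fun r => r) 2 1) 2) with 1%nat by reflexivity. simpl. f_equal; [|f_equal]; field. }
  destruct Ha as [->| ->].
  - pose proof (IL_lim_inf (fun r => r) 2 V1 ltac:(lia) V1_nodup V1_mem) as H.
    rewrite E in H. replace (ln 2) with (renyi p_infty [/2; /2]); [exact H|].
    simpl.
    rewrite (Rmax_left (/2) 0) by lra. rewrite Rmax_left by lra.
    rewrite ln_Rinv by lra. ring.
  - pose proof (IL_lim_one (fun r => r) 2 V1 ltac:(lia) V1_nodup V1_mem) as H.
    rewrite E in H. replace (ln 2) with (renyi (Finite 1) [/2; /2]); [exact H|].
    simpl. destruct (Req_EM_T 1 1) as [_|n]; [|lra].
    rewrite ln_Rinv by lra. field.
Qed.

Definition C2 (T L : nat) : program := prog (fun r => Nat.min r L) (T * L).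

Lemma V2_mem T L : (2 <= T)%nat -> (1 <= L)%nat ->
  forall o, In o (seq 0 (S L)) <-> exists r, (r < T * L)%nat /\ Nat.min r L = o.
Proof.
  intros HT HL o. rewrite in_seq. split.
  - intros Ho. exists o. split; [nia|]. apply Nat.min_l; lia.
  - intros [r [Hr <-]]. pose proof (Nat.le_min_r r L). lia.
Qed.

Lemma C2_list T L : (2 <= T)%nat -> (1 <= L)%nat ->
  map (fun o => INR (cntp (P_of (fun r => Nat.min r L) (T * L) o) (T * L)) / INR (T * L)) (seq 0 (S L))
  = map (fun _ => / (INR T * INR L)) (seq 0 L) ++ [(INR T - 1) / INR T].
Proof.
  intros HT HL. rewrite seq_S, map_app. simpl. f_equal.
  - apply map_ext_in. intros o Ho. apply in_seq in Ho. rewrite cnt2 by lia.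
    destruct (Nat.ltb_spec o L); [|lia]. rewrite mult_INR. simpl. field.
    split; apply not_0_INR; lia.
  - rewrite cnt2 by lia. destruct (Nat.ltb_spec L L); [lia|].
    rewrite minus_INR by nia. rewrite !mult_INR. f_equal. field.
    split; apply not_0_INR; lia.
Qed.

Lemma C2_inf T L : (2 <= T)%nat -> (1 <= L)%nat ->
  is_lim_seq (fun N => IL p_infty (C2 T L) N) (- ln ((INR T - 1) / INR T)).
Proof.
  intros HT HL.
  assert (HQ : (0 < T * L)%nat) by nia.
  pose proof (IL_lim_inf _ _ _ HQ (seq_NoDup (S L) 0) (V2_mem T L HT HL)) as H.
  rewrite C2_list in H by auto. simpl in H. rewrite fold_right_app in H. simpl in H.
  assert (HT' : 2 <= INR T) by (apply (le_INR 2); lia).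
  assert (HL' : 1 <= INR L) by (apply (le_INR 1); lia).
  rewrite Rmax_left in H by (apply Rmult_le_pos; [lra|left; apply Rinv_0_lt_compat; lra]).
  rewrite fold_max_const in H; auto.
  apply Rle_trans with (/ INR T).
  - apply Rinv_le_contravar; nra.
  - unfold Rdiv. replace (/ INR T) with (1 * / INR T) at 1 by ring.
    apply Rmult_le_compat_r; [left; apply Rinv_0_lt_compat; lra|lra].
Qed.

Lemma C2_one T L : (2 <= T)%nat -> (1 <= L)%nat ->
  exists h : R, is_lim_seq (fun N => IL (Finite 1) (C2 T L) N) h /\ ln (INR L) / INR T <= h.
Proof.
  intros HT HL.
  assert (HQ : (0 < T * L)%nat) by nia.
  pose proof (IL_lim_one _ _ _ HQ (seq_NoDup (S L) 0) (V2_mem T L HT HL)) as H.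
  rewrite C2_list in H by auto.
  eexists; split; [exact H|].
  simpl. destruct (Req_EM_T 1 1) as [_|n]; [|lra].
  rewrite map_app, fold_right_app. simpl. rewrite fold_shan_const, length_seq.
  assert (HT' : 2 <= INR T) by (apply (le_INR 2); lia).
  assert (HL' : 1 <= INR L) by (apply (le_INR 1); lia).
  set (t := INR T) in *. set (l := INR L) in *.
  assert (Hm : ln ((t - 1) / t) <= 0).
  { rewrite <- ln_1. apply ln_le. apply Rdiv_lt_0_compat; lra.
    apply Rmult_le_reg_r with t; [lra|]. unfold Rdiv. rewrite Rmult_assoc, Rinv_l by lra. lra. }
  assert (Hm2 : 0 <= (t - 1) / t) by (apply Rdiv_le_0_compat; lra).
  rewrite ln_Rinv by nra. rewrite ln_mult by lra.
  assert (Hlt : 0 <= ln t) by (rewrite <- ln_1; apply ln_le; lra).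
  assert (E : l * (/ (t * l) * - (ln t + ln l)) = - (ln t + ln l) / t) by (field; lra).
  rewrite E.
  assert (0 <= (ln t)/t) by (apply Rdiv_le_0_compat; lra).
  assert (0 <= - ((t - 1) / t * ln ((t - 1) / t))) by nra.
  unfold Rdiv in *. nra.
Qed.

Theorem lemma3 :
  forall D : R, 1 < D ->
  exists (alpha beta : Rbar) (C1 C2 : program),
    valid_order alpha /\ valid_order beta /\ alpha <> beta /\
    finite_order C1 /\ finite_order C2 /\
    (exists la : R,
        is_lim_seq (fun N => IL alpha C1 N / IL alpha C2 N) (Finite la) /\ D < la) /\
    (exists lb : R,
        is_lim_seq (fun N => IL beta C1 N / IL beta C2 N) (Finite lb) /\ lb < / D).
Proof.
  intros D HD.
  destruct (INR_unbounded (2 * D + 2)) as [T HT].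
  assert (HT2 : (2 <= T)%nat).
  { destruct (le_lt_dec 2 T) as [h|h]; auto. apply lt_INR in h. simpl in h. lra. }
  destruct (INR_unbounded (exp (INR T * D))) as [L HL].
  pose proof (exp_pos (INR T * D)).
  assert (HL1 : (1 <= L)%nat).
  { destruct L; [simpl in HL; lra|lia]. }
  assert (Hln2 : / 2 < ln 2) by apply ln_lt_2.
  assert (Hln2' : ln 2 < 1).
  { rewrite <- (ln_exp 1). apply ln_increasing; [lra|]. pose proof (exp_ineq1 1 ltac:(lra)). lra. }
  exists p_infty, (Finite 1), C1, (C2 T L).
  split; [exact I|]. split; [unfold valid_order; simpl; apply Rlt_0_1|]. split; [discriminate|].
  split; [apply (fo_prog _ 2 1); intros; lia|].
  split; [apply (fo_prog _ (T * L) L); [nia|]; intros; apply Nat.le_min_r|].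
  set (t := INR T) in *. set (l := INR L) in *.
  assert (Ht : 2 * D + 2 < t) by lra.
  split.
  - set (d := - ln ((t - 1) / t)).
    assert (Hd0 : 0 < d).
    { unfold d. assert (ln ((t - 1) / t) < 0); [|lra].
      rewrite <- ln_1. apply ln_increasing. apply Rdiv_lt_0_compat; lra.
      apply Rmult_lt_reg_r with t; [lra|]. unfold Rdiv. rewrite Rmult_assoc, Rinv_l by lra. lra. }
    assert (Hd1 : d <= / (t - 1)).
    { unfold d. rewrite <- ln_Rinv by (apply Rdiv_lt_0_compat; lra).
      pose proof (exp_ineq1_le (ln (/ ((t - 1) / t)))) as Hx.
      rewrite exp_ln in Hx by (apply Rinv_0_lt_compat, Rdiv_lt_0_compat; lra).
      replace (/ ((t - 1) / t)) with (1 + / (t - 1)) in Hx |- * by (field; lra). lra. }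
    exists (ln 2 / d). split.
    + apply is_lim_seq_div'; [apply C1_lim; auto|apply C2_inf; auto|lra].
    + assert (D * d < ln 2).
      { apply Rle_lt_trans with (D * / (t - 1)). apply Rmult_le_compat_l; lra.
        apply Rlt_trans with (/ 2); [|lra].
        apply Rmult_lt_reg_r with (2 * (t - 1)); [lra|].
        replace (D * / (t - 1) * (2 * (t - 1))) with (2 * D) by (field; lra). lra. }
      apply Rmult_lt_reg_r with d; [lra|]. unfold Rdiv. rewrite Rmult_assoc, Rinv_l by lra. lra.
  - destruct (C2_one T L HT2 HL1) as [h [Hh Hhl]]. fold t l in Hhl.
    assert (Hlt : t * D < ln l).
    { rewrite <- (ln_exp (t * D)). apply ln_increasing; auto. }
    assert (Hh2 : D < h).
    { apply Rlt_le_trans with (ln l / t); auto.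
      apply Rmult_lt_reg_r with t; [lra|]. unfold Rdiv. rewrite Rmult_assoc, Rinv_l by lra. lra. }
    exists (ln 2 / h). split.
    + apply is_lim_seq_div'; [apply C1_lim; auto|exact Hh|lra].
    + apply Rmult_lt_reg_r with (h * D); [nra|].
      replace (ln 2 / h * (h * D)) with (ln 2 * D) by (field; lra).
      replace (/ D * (h * D)) with h by (field; lra). nra.
Qed.
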